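(* Let $G$ be a semi-perfect graph and let $k$ be a positive integer. The following statements are equivalent: (a) $G$ has a $k$-tight clique partition; (b) $G$ has a $k$-tight $\alpha$-clique partition; (c) every $\alpha$-clique partition of $G$ is $k$-tight; (d) $\mu_\alpha(G)\le k-1$.
   Context: All graphs are finite, simple and undirected. For a graph $G$, $\alpha(G)$ is the maximum size of an independent set and $i(G)$ is the minimum size of a maximal (with respect to inclusion) independent set; the independence gap is $\mu_\alpha(G)=\alpha(G)-i(G)$. $\theta(G)$ denotes the minimum number of cliques whose union is $V(G)$. A graph $G$ is semi-perfect if $\alpha(G)=\theta(G)$. A clique partition of $G$ is a set of pairwise disjoint cliques whose union is $V(G)$; an $\alpha$-clique partition is a clique partition consisting of exactly $\alpha(G)$ cliques. For a positive integer $k$, a clique partition of $G$ is $k$-tight if for every $k$ cliques of the partition, their union intersects every maximal independent set of $G$. *)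

(* Defs.v *)
(* A simple graph is a symmetric irreflexive relation e on a finType T. *)
From mathcomp Require Import all_boot.
Set Implicit Arguments. Unset Strict Implicit. Unset Printing Implicit Defensive.

Section Graphs.
Variables (T : finType) (e : rel T).

Definition independent (S : {set T}) : bool :=
  [forall x in S, forall y in S, ~~ e x y].

Definition clique (S : {set T}) : bool :=
  [forall x in S, forall y in S, (x != y) ==> e x y].

Definition maximal_independent (S : {set T}) : bool :=
  maxset independent S.

Definition alpha : nat := \max_(S : {set T} | independent S) #|S|.

Definition indep_domination : nat :=
  \big[minn/#|T|]_(S : {set T} | maximal_independent S) #|S|.

(* independence gap mu_alpha(G) = alpha(G) - i(G)  (alpha >= i, so truncation is harmless) *)
Definition indep_gap : nat := alpha - indep_domination.

Definition clique_cover_number : nat :=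
  \big[minn/#|T|]_(P : {set {set T}} |
      [forall C in P, clique C] && (cover P == [set: T])) #|P|.

Definition semi_perfect : Prop := alpha = clique_cover_number.

Definition clique_partition (P : {set {set T}}) : bool :=
  partition P [set: T] && [forall C in P, clique C].

Definition alpha_clique_partition (P : {set {set T}}) : bool :=
  clique_partition P && (#|P| == alpha).

Definition k_tight (k : nat) (P : {set {set T}}) : Prop :=
  forall Q : {set {set T}}, Q \subset P -> #|Q| = k ->
  forall I : {set T}, maximal_independent I -> cover Q :&: I != set0.

End Graphs.

(* Main.v *)
Require Import Defs.
From mathcomp Require Import all_boot zify.
Set Implicit Arguments. Unset Strict Implicit.

Lemma bigmin_le (I : finType) (P : pred I) (F : I -> nat) d i0 :
  P i0 -> \big[minn/d]_(i | P i) F i <= F i0.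
Proof.
move=> Pi0; rewrite unlock /=.
have : i0 \in index_enum I by rewrite mem_index_enum.
elim: (index_enum I) => //= j r IH; rewrite in_cons => /orP[/eqP<-|ir].
  by rewrite Pi0 geq_minl.
case: (P j) => //=; last exact: IH ir.
by apply: leq_trans (geq_minr _ _) (IH ir).
Qed.

Lemma sub_card_k (U : finType) (M : {set U}) k : k <= #|M| ->
  exists Q : {set U}, Q \subset M /\ #|Q| = k.
Proof.
move=> hk; exists [set x in take k (enum M)]; split.
  by apply/subsetP => x; rewrite inE => /mem_take; rewrite mem_enum.
rewrite cardsE; move/card_uniqP: (take_uniq k (enum_uniq (mem M))) ->.
by rewrite size_takel // -cardE.
Qed.

Section G.
Variables (T : finType) (e : rel T).
Hypothesis e_sym : symmetric e.
Hypothesis e_irr : irreflexive e.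

Lemma clique_sub (A B : {set T}) : clique e B -> A \subset B -> clique e A.
Proof.
move=> /forall_inP cB sAB; apply/forall_inP => x xA; apply/forall_inP => y yA.
exact: (forall_inP (cB x (subsetP sAB x xA)) y (subsetP sAB y yA)).
Qed.

Lemma cover_to_partition (P : {set {set T}}) :
  [forall C in P, clique e C] -> cover P == [set: T] ->
  exists P', clique_partition e P' /\ #|P'| <= #|P|.
Proof.
move=> /forall_inP cP /eqP cov.
pose f x := odflt set0 [pick C in P | x \in C].
have fP x : f x \in P /\ x \in f x.
  have : x \in cover P by rewrite cov inE.
  case/bigcupP => C CP xC; rewrite /f; case: pickP => [D /andP[]|] //=.
  by move/(_ C); rewrite CP xC.
exists (preim_partition f [set: T]); split.
  rewrite /clique_partition preim_partitionP /=.
  apply/forall_inP => B /imsetP [x _ ->].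
  apply: (clique_sub (cP _ (fP x).1)); apply/subsetP => y; rewrite inE => /andP[_ /eqP ->].
  exact: (fP y).2.
rewrite /preim_partition /equivalence_partition.
have -> : [set [set y in [set: T] | f x == f y] | x in [set: T]] =
   (fun C => [set y in [set: T] | C == f y]) @: (f @: [set: T]).
  by rewrite -imset_comp.
apply: leq_trans (leq_imset_card _ _) _; apply: subset_leq_card.
by apply/subsetP => C /imsetP [x _ ->]; exact: (fP x).1.
Qed.

Lemma tight_iff k (P : {set {set T}}) : 0 < k -> clique_partition e P ->
  (k_tight e k P <-> forall I, maximal_independent e I -> #|P| - #|I| <= k - 1).
Proof.
move=> k0 /andP[/and3P[/eqP cov triv _] /forall_inP cP]; split.
  move=> Ht I mI; rewrite leqNgt; apply/negP => hk.
  pose M := P :\: (pblock P @: I).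
  have hM : k <= #|M|.
    rewrite cardsD; apply: leq_trans (leq_sub2l _ (leq_trans (subset_leq_card (subsetIr P (pblock P @: I))) (leq_imset_card (pblock P) I))).
    by rewrite -(prednK k0) -subn1.
  have [Q [sQM cQ]] := sub_card_k hM.
  have sQP : Q \subset P by apply: subset_trans sQM (subsetDl _ _).
  have /set0Pn [x] := Ht Q sQP cQ I mI; rewrite inE => /andP [/bigcupP [C CQ xC] xI].
  have := subsetP sQM C CQ; rewrite inE => /andP [/negP []].
  apply/imsetP; exists x => //; rewrite (def_pblock triv _ xC) //.
  exact: subsetP sQP C CQ.
move=> H Q sQP cQ I mI; apply/negP => /eqP disj.
have indI := maxsetp mI.
have xcov x : x \in cover P by rewrite cov inE.
have inj : {in I &, injective (pblock P)}.
  move=> x y xI yI eq; apply/eqP; apply/negPn/negP => nxy.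
  have Bc := cP _ (pblock_mem (xcov x)).
  have xB : x \in pblock P x by rewrite mem_pblock.
  have yB : y \in pblock P x by rewrite eq mem_pblock.
  have := forall_inP (forall_inP Bc x xB) y yB; rewrite nxy /= => exy.
  by have := forall_inP (forall_inP indI x xI) y yI; rewrite exy.
have sub : pblock P @: I \subset P :\: Q.
  apply/subsetP => B /imsetP [x xI ->]; rewrite inE pblock_mem // andbT.
  apply/negP => BQ; have : x \in cover Q :&: I.
    by rewrite inE xI andbT; apply/bigcupP; exists (pblock P x); rewrite // mem_pblock.
  by rewrite disj inE.
have := subset_leq_card sub; rewrite card_in_imset // cardsD.
have -> : P :&: Q = Q by apply/setIidPr.
have := H I mI; have := subset_leq_card sQP; rewrite cQ; move: (#|P|) (#|I|) k0 => p i; clear; lia.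
Qed.

Lemma alpha_le : alpha e <= #|T|.
Proof.
rewrite /alpha; elim/big_ind: _ => //; first by move=> x y; rewrite geq_max => ->.
by move=> S _; apply: max_card.
Qed.

Lemma gap_iff k : 0 < k ->
  ((forall I, maximal_independent e I -> alpha e - #|I| <= k - 1) <->
   indep_gap e <= k - 1).
Proof.
move=> k0; rewrite /indep_gap /indep_domination; split.
  move=> H; elim/big_ind: _ => //.
  - by have := alpha_le; lia.
  - by move=> x y; rewrite /minn; case: ifP.
move=> H I mI; apply: leq_trans H; apply: leq_sub2l; exact: bigmin_le.
Qed.

Hypothesis Hsp : semi_perfect e.

Lemma part_ge_alpha P : clique_partition e P -> alpha e <= #|P|.
Proof.
case/andP => /and3P [cov _ _] cP; rewrite Hsp /clique_cover_number.
by apply: bigmin_le; rewrite cP cov.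
Qed.

Lemma ex_alpha_part : exists P, alpha_clique_partition e P.
Proof.
suff [P [cp le]] : exists P, clique_partition e P /\ #|P| <= alpha e.
  exists P; rewrite /alpha_clique_partition cp eqn_leq le /=; exact: part_ge_alpha.
rewrite Hsp /clique_cover_number; elim/big_ind: _.
- have [||P [cp le]] := @cover_to_partition [set [set x] | x in [set: T]].
  + apply/forall_inP => C /imsetP [x _ ->]; apply/forall_inP => y; rewrite inE => /eqP ->.
    by apply/forall_inP => z; rewrite inE => /eqP ->; rewrite eqxx.
  + apply/eqP/setP => x; rewrite !inE; apply/bigcupP; exists [set x];
      [by apply/imsetP; exists x | by rewrite inE].
  exists P; split => //; apply: leq_trans le _.
  by apply: leq_trans (leq_imset_card _ _) _; rewrite cardsT.
- by move=> x y; rewrite /minn; case: ifP.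
- move=> P /andP [cP cov]; have [P' [cp le]] := cover_to_partition cP cov.
  by exists P'.
Qed.
End G.

Unset Implicit Arguments.

Theorem mainTheorem4 (T : finType) (e : rel T)
  (e_sym : symmetric e) (e_irr : irreflexive e)
  (Hsp : semi_perfect e) (k : nat) (Hk : 0 < k) :
  [/\ ((exists P, clique_partition e P /\ k_tight e k P) <->
        (exists P, alpha_clique_partition e P /\ k_tight e k P)),
      ((exists P, alpha_clique_partition e P /\ k_tight e k P) <->
        (forall P, alpha_clique_partition e P -> k_tight e k P)) &
      ((forall P, alpha_clique_partition e P -> k_tight e k P) <->
        indep_gap e <= k - 1)].
Proof.
have [P0 aP0] := ex_alpha_part Hsp.
have aP_cp P : alpha_clique_partition e P -> clique_partition e P by case/andP.
have aP_card P : alpha_clique_partition e P -> #|P| = alpha e by case/andP => _ /eqP.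
have toA P : clique_partition e P -> k_tight e k P ->
    forall I, maximal_independent e I -> alpha e - #|I| <= k - 1.
  move=> cp t I mI; have := (tight_iff Hk cp).1 t I mI.
  have := part_ge_alpha Hsp cp; lia.
have fromA : (forall I, maximal_independent e I -> alpha e - #|I| <= k - 1) ->
    forall P, alpha_clique_partition e P -> k_tight e k P.
  move=> H P aP; apply/(tight_iff Hk (aP_cp _ aP)); rewrite aP_card //.
split; split.
- case=> P [cp t]; exists P0; split => //; exact: fromA (toA P cp t) _ aP0.
- by case=> P [aP t]; exists P; split => //; apply: aP_cp.
- case=> P [aP t]; apply: fromA; exact: toA P (aP_cp _ aP) t.
- by move=> H; exists P0; split => //; apply: H.
- move=> H; apply/gap_iff => //; exact: toA P0 (aP_cp _ aP0) (H _ aP0).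
- by move=> H; apply: fromA; apply/gap_iff.
Qed.
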